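(* Let $G$ be a locally compact, $\sigma$-compact abelian group acting continuously on a compact metric space $(X,d)$. If the proximal relation $\Pr=\{(x,y):\inf_{t\in G}d(t\cdot x,t\cdot y)=0\}$ is closed in $X\times X$, then $\Pr$ coincides with the complete proximality relation $\sim_{cp}$.
   Context: Let $\mathcal A$ be the collection of subsets $A\subset G$ which contain a translate of every compact subset of $G$. Points $x,y\in X$ are proximal in $A$ if $\inf_{t\in A}d(t\cdot x,t\cdot y)=0$, and completely proximal, $x\sim_{cp}y$, if they are proximal in every $A\in\mathcal A$. *)

(* Defs.v *)
From Stdlib Require Import Reals List Classical.
Open Scope R_scope.

Definition is_topology {T : Type} (op : (T -> Prop) -> Prop) : Prop :=
  op (fun _ => True) /\
  (forall U V, op U -> op V -> op (fun x => U x /\ V x)) /\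
  (forall F : (T -> Prop) -> Prop,
      (forall U, F U -> op U) -> op (fun x => exists U, F U /\ U x)).

Definition is_closed {T : Type} (op : (T -> Prop) -> Prop) (C : T -> Prop) :=
  op (fun x => ~ C x).

Definition prod_open {S T : Type} (opS : (S -> Prop) -> Prop)
  (opT : (T -> Prop) -> Prop) (W : S * T -> Prop) : Prop :=
  forall p, W p -> exists A B, opS A /\ opT B /\ A (fst p) /\ B (snd p) /\
    (forall a b, A a -> B b -> W (a, b)).

Definition continuous {S T : Type} (opS : (S -> Prop) -> Prop)
  (opT : (T -> Prop) -> Prop) (f : S -> T) : Prop :=
  forall V, opT V -> opS (fun x => V (f x)).

Definition is_compact {T : Type} (op : (T -> Prop) -> Prop) (K : T -> Prop) : Prop :=
  forall F : (T -> Prop) -> Prop,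
    (forall U, F U -> op U) ->
    (forall x, K x -> exists U, F U /\ U x) ->
    exists l : list (T -> Prop),
      (forall U, In U l -> F U) /\ (forall x, K x -> exists U, In U l /\ U x).

Definition hausdorff {T : Type} (op : (T -> Prop) -> Prop) : Prop :=
  forall x y, x <> y -> exists U V, op U /\ op V /\ U x /\ V y /\
    (forall z, U z -> V z -> False).

Definition locally_compact {T : Type} (op : (T -> Prop) -> Prop) : Prop :=
  hausdorff op /\
  forall x, exists U K, op U /\ U x /\ (forall z, U z -> K z) /\ is_compact op K.

Definition sigma_compact {T : Type} (op : (T -> Prop) -> Prop) : Prop :=
  exists K : nat -> T -> Prop, (forall n, is_compact op (K n)) /\
    (forall x, exists n, K n x).

Definition is_abelian_group {G : Type} (mul : G -> G -> G) (inv : G -> G)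
  (e : G) : Prop :=
  (forall a b c, mul a (mul b c) = mul (mul a b) c) /\
  (forall a, mul e a = a) /\
  (forall a, mul (inv a) a = e) /\
  (forall a b, mul a b = mul b a).

Definition is_topological_group {G : Type} (mul : G -> G -> G) (inv : G -> G)
  (opG : (G -> Prop) -> Prop) : Prop :=
  continuous (prod_open opG opG) opG (fun p => mul (fst p) (snd p)) /\
  continuous opG opG inv.

Definition is_metric {X : Type} (d : X -> X -> R) : Prop :=
  (forall x y, 0 <= d x y) /\
  (forall x y, d x y = 0 <-> x = y) /\
  (forall x y, d x y = d y x) /\
  (forall x y z, d x z <= d x y + d y z).

Definition metric_open {X : Type} (d : X -> X -> R) (U : X -> Prop) : Prop :=
  forall x, U x -> exists r, 0 < r /\ forall y, d x y < r -> U y.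

Definition is_action {G X : Type} (mul : G -> G -> G) (e : G)
  (act : G -> X -> X) : Prop :=
  (forall x, act e x = x) /\
  (forall s t x, act (mul s t) x = act s (act t x)).

(** x, y proximal in A : inf_{t in A} d(t x, t y) = 0 (d >= 0). *)
Definition proximal_in {G X : Type} (act : G -> X -> X) (d : X -> X -> R)
  (A : G -> Prop) (x y : X) : Prop :=
  forall eps, 0 < eps -> exists t, A t /\ d (act t x) (act t y) < eps.

Definition proximal {G X : Type} (act : G -> X -> X) (d : X -> X -> R)
  (x y : X) : Prop :=
  proximal_in act d (fun _ => True) x y.

Definition in_calA {G : Type} (mul : G -> G -> G) (opG : (G -> Prop) -> Prop)
  (A : G -> Prop) : Prop :=
  forall K : G -> Prop, is_compact opG K -> exists g, forall k, K k -> A (mul g k).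

Definition completely_proximal {G X : Type} (mul : G -> G -> G)
  (opG : (G -> Prop) -> Prop) (act : G -> X -> X) (d : X -> X -> R)
  (x y : X) : Prop :=
  forall A, in_calA mul opG A -> proximal_in act d A x y.

(* Main.v *)
Require Import Defs.
From Stdlib Require Import Reals Lra List Classical.
Open Scope R_scope.

Lemma ball_open {X : Type} (d : X -> X -> R) (Hd : is_metric d) c r :
  metric_open d (fun z => d c z < r).
Proof.
  destruct Hd as [H0 [H1 [H2 H3]]].
  intros z Hz. exists (r - d c z). split; [lra|].
  intros y Hy. pose proof (H3 c z y). lra.
Qed.

Lemma inter_open {X : Type} (d : X -> X -> R) U V :
  metric_open d U -> metric_open d V -> metric_open d (fun z => U z /\ V z).
Proof.
  intros HU HV z [Uz Vz].
  destruct (HU z Uz) as [r1 [Hr1 H1]]. destruct (HV z Vz) as [r2 [Hr2 H2]].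
  exists (Rmin r1 r2). split. { apply Rmin_pos; auto. }
  intros y Hy. split.
  - apply H1. pose proof (Rmin_l r1 r2). lra.
  - apply H2. pose proof (Rmin_r r1 r2). lra.
Qed.

Lemma act_cont {G X : Type} (opG : (G -> Prop) -> Prop) (d : X -> X -> R)
  (act : G -> X -> X)
  (Hactc : continuous (prod_open opG (metric_open d)) (metric_open d)
             (fun p => act (fst p) (snd p))) t V :
  metric_open d V -> metric_open d (fun z => V (act t z)).
Proof.
  intros HV z Hz.
  destruct (Hactc V HV (t, z) Hz) as [A [B [oA [oB [At [Bz HAB]]]]]].
  simpl in *.
  destruct (oB z Bz) as [r [Hr Hb]]. exists r. split; auto.
Qed.

Definition good {G X : Type} (act : G -> X -> X) (d : X -> X -> R)
  (P : X -> X -> Prop) (eps : R) (A B : X -> Prop) : Prop :=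
  exists L : list G, forall a b, A a -> B b -> P a b ->
    exists t, In t L /\ d (act t a) (act t b) < eps.

Lemma finite_compact {G : Type} (opG : (G -> Prop) -> Prop) (L : list G) :
  is_compact opG (fun t => In t L).
Proof.
  induction L as [|t L IH]; intros F HF Hcov.
  - exists nil. split; [intros U []|intros x []].
  - destruct (Hcov t (or_introl eq_refl)) as [U [FU Ut]].
    destruct (IH F HF (fun x Hx => Hcov x (or_intror Hx))) as [l [Hl1 Hl2]].
    exists (U :: l). split.
    + intros V [<-|HV]; auto.
    + intros x [<-|Hx].
      * exists U; split; [left|]; auto.
      * destruct (Hl2 x Hx) as [V [HV Vx]]. exists V; split; [right|]; auto.
Qed.

Theorem mainTheorem18
  (G : Type) (mul : G -> G -> G) (inv : G -> G) (e : G)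
  (opG : (G -> Prop) -> Prop)
  (X : Type) (d : X -> X -> R) (act : G -> X -> X)
  (HgrpG : is_abelian_group mul inv e)
  (HtopG : is_topology opG)
  (HtgG : is_topological_group mul inv opG)
  (HlcG : locally_compact opG)
  (HscG : sigma_compact opG)
  (Hd : is_metric d)
  (HXcpt : is_compact (metric_open d) (fun _ => True))
  (Hact : is_action mul e act)
  (Hactc : continuous (prod_open opG (metric_open d)) (metric_open d)
             (fun p => act (fst p) (snd p)))
  (Hclosed : is_closed (prod_open (metric_open d) (metric_open d))
               (fun p => proximal act d (fst p) (snd p))) :
  forall x y : X, proximal act d x y <-> completely_proximal mul opG act d x y.
Proof.
  destruct HgrpG as [Hassoc [Hid [Hinv Hcomm]]].
  destruct Hact as [Hae Hamul].
  pose proof Hd as Hd'. destruct Hd' as [Hd0 [Hd1 [Hd2 Hd3]]].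
  set (P := fun a b => proximal act d a b).
  assert (step1 : forall eps, 0 < eps -> forall x y, exists A B,
            metric_open d A /\ metric_open d B /\ A x /\ B y /\ good act d P eps A B).
  { intros eps Heps x y.
    destruct (classic (P x y)) as [Pxy|nPxy].
    - destruct (Pxy eps Heps) as [t [_ Ht]].
      set (de := (eps - d (act t x) (act t y)) / 2).
      assert (Hde : 0 < de) by (unfold de; lra).
      exists (fun z => d (act t x) (act t z) < de), (fun z => d (act t y) (act t z) < de).
      split; [apply (act_cont opG d act Hactc t _ (ball_open d Hd _ _))|].
      split; [apply (act_cont opG d act Hactc t _ (ball_open d Hd _ _))|].
      split; [rewrite (proj2 (Hd1 _ _) eq_refl); auto|].
      split; [rewrite (proj2 (Hd1 _ _) eq_refl); auto|].
      exists (t :: nil). intros a b Ha Hb _. exists t. split; [left; auto|].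
      pose proof (Hd3 (act t a) (act t x) (act t b)).
      pose proof (Hd3 (act t x) (act t y) (act t b)).
      rewrite (Hd2 (act t a) (act t x)) in *. unfold de in *. lra.
    - destruct (Hclosed (x, y) nPxy) as [A [B [oA [oB [Ax [By HAB]]]]]].
      exists A, B. repeat split; auto.
      exists nil. intros a b Ha Hb Pab. exfalso. exact (HAB a b Ha Hb Pab). }
  assert (step2 : forall eps, 0 < eps -> forall x, exists A,
            metric_open d A /\ A x /\ good act d P eps A (fun _ => True)).
  { intros eps Heps x.
    set (F := fun B => metric_open d B /\ exists A, metric_open d A /\ A x /\
                                            good act d P eps A B).
    destruct (HXcpt F) as [l [Hl1 Hl2]].
    { intros U [HU _]; auto. }
    { intros y _. destruct (step1 eps Heps x y) as [A [B [oA [oB [Ax [By HG]]]]]].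
      exists B. split; auto. split; auto. exists A; auto. }
    assert (Hind : forall l, (forall B, In B l -> F B) -> exists A,
              metric_open d A /\ A x /\
              good act d P eps A (fun b => exists B, In B l /\ B b)).
    { induction l0 as [|B l0 IH]; intros Hin.
      - exists (fun _ => True). split; [intros z _; exists 1; split; [lra|auto]|].
        split; auto. exists nil. intros a b _ [B [[] _]].
      - destruct (Hin B (or_introl eq_refl)) as [_ [A1 [oA1 [A1x [L1 HL1]]]]].
        destruct (IH (fun B' H => Hin B' (or_intror H))) as [A2 [oA2 [A2x [L2 HL2]]]].
        exists (fun z => A1 z /\ A2 z). split; [apply inter_open; auto|].
        split; [auto|]. exists (L1 ++ L2).
        intros a b [Ha1 Ha2] [B' [[<-|HB'] Bb]] Pab.
        + destruct (HL1 a b Ha1 Bb Pab) as [t [Ht1 Ht2]].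
          exists t; split; auto; apply in_or_app; auto.
        + destruct (HL2 a b Ha2 (ex_intro _ B' (conj HB' Bb)) Pab) as [t [Ht1 Ht2]].
          exists t; split; auto; apply in_or_app; auto. }
    destruct (Hind l Hl1) as [A [oA [Ax [L HL]]]].
    exists A. split; auto. split; auto. exists L.
    intros a b Ha _ Pab. apply (HL a b Ha); auto. }
  assert (step3 : forall eps, 0 < eps -> good act d P eps (fun _ => True) (fun _ => True)).
  { intros eps Heps.
    set (F := fun A => metric_open d A /\ good act d P eps A (fun _ => True)).
    destruct (HXcpt F) as [l [Hl1 Hl2]].
    { intros U [HU _]; auto. }
    { intros x _. destruct (step2 eps Heps x) as [A [oA [Ax HG]]].
      exists A. split; auto. split; auto. }
    assert (Hind : forall l, (forall A, In A l -> F A) ->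
              good act d P eps (fun a => exists A, In A l /\ A a) (fun _ => True)).
    { induction l0 as [|A l0 IH]; intros Hin.
      - exists nil. intros a b [A [[] _]].
      - destruct (Hin A (or_introl eq_refl)) as [_ [L1 HL1]].
        destruct (IH (fun B' H => Hin B' (or_intror H))) as [L2 HL2].
        exists (L1 ++ L2).
        intros a b [A' [[<-|HA'] Aa]] Hb Pab.
        + destruct (HL1 a b Aa Hb Pab) as [t [Ht1 Ht2]].
          exists t; split; auto; apply in_or_app; auto.
        + destruct (HL2 a b (ex_intro _ A' (conj HA' Aa)) Hb Pab) as [t [Ht1 Ht2]].
          exists t; split; auto; apply in_or_app; auto. }
    destruct (Hind l Hl1) as [L HL]. exists L.
    intros a b _ _ Pab. apply HL; auto. }
  assert (Hinvar : forall g x y, P x y -> P (act g x) (act g y)).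
  { intros g x y Pxy eps' Heps'.
    destruct (Pxy eps' Heps') as [s [_ Hs]].
    exists (mul s (inv g)). split; auto.
    rewrite <- !Hamul.
    assert (E : mul (mul s (inv g)) g = s).
    { rewrite <- Hassoc, Hinv, Hcomm, Hid. reflexivity. }
    rewrite E. exact Hs. }
  intros x y. split.
  - intros Pxy A HA eps Heps.
    destruct (step3 eps Heps) as [L HL].
    destruct (HA (fun t => In t L) (finite_compact opG L)) as [g Hg].
    destruct (HL (act g x) (act g y) I I (Hinvar g x y Pxy)) as [t [Ht1 Ht2]].
    exists (mul g t). split; [apply Hg; auto|].
    rewrite Hcomm, !Hamul. exact Ht2.
  - intros Hcp eps Heps.
    apply (Hcp (fun _ => True)); auto.
    intros K _. exists e. auto.
Qed.
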